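(* Let $\Delta_+=\{\delta-\gamma:\gamma\in\Sigma^+_{\beta,0}\cap\Sigma_{\delta,1}\}$ and $\Delta_-=\{\delta+\gamma:\gamma\in\Sigma^+_{\beta,0}\cap\Sigma_{\delta,-1}\}$. Then $\Sigma_{\beta,1}\cap\Sigma_{\delta,1}=\Delta_+\sqcup\Delta_-$, $\Sigma_{\beta,1}\cap\Sigma_{\delta,0}=\{\beta-\gamma:\gamma\in\Sigma_{\beta,1}\cap\Sigma_{\delta,1}\}$, $\Sigma_{\beta,1}\cap\Sigma_{\delta,2}=\{\delta\}$, and $\Sigma_{\beta,1}\cap\Sigma_{\delta,-1}=\{\beta-\delta\}$.
   Context: Let $\mathfrak g$ be a compact simple Lie algebra not isomorphic to $\mathfrak{sp}(n)$, $\mathfrak a$ a maximal abelian subalgebra, $\Sigma$ the root system of $\mathfrak g^{\mathbb C}$ w.r.t. $\mathfrak a^{\mathbb C}$ with inner product $(\,,\,)$ induced by the Killing form, $\Sigma^+$ a positive system with highest root $\beta$. For $\gamma\in\Sigma$ and $n\in\mathbb Z$ let $\Sigma_{\gamma,n}=\{\alpha\in\Sigma:2(\gamma,\alpha)/(\gamma,\gamma)=n\}$ and $\Sigma^+_{\gamma,n}=\Sigma_{\gamma,n}\cap\Sigma^+$. Fix $\delta\in\Sigma_{\beta,1}$ with $(\delta,\delta)=(\beta,\beta)$. *)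

(* Defs.v *)
From HB Require Import structures.
From mathcomp Require Import all_boot all_order all_algebra.
From mathcomp Require Import reals.
Set Implicit Arguments. Unset Strict Implicit. Unset Printing Implicit Defensive.
Import Order.TTheory GRing.Theory Num.Theory.
Local Open Scope ring_scope.

Section RootSystems.
Variables (R : realType) (n : nat).
Notation V := 'rV[R]_n.

Definition dot (u v : V) : R := \sum_(i < n) u 0 i * v 0 i.

Definition cpair (g a : V) : R := 2 * dot g a / dot g g.

Definition refl (a x : V) : V := x - (2 * dot x a / dot a a) *: a.

Definition is_root_system (S : seq V) : Prop :=
  [/\ (0 : V) \notin S,
      (<<S>>%VS = fullv),
      (forall a b, a \in S -> b \in S -> refl a b \in S) &
      (forall a b, a \in S -> b \in S -> exists z : int, cpair a b = z%:~R)].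

Definition reduced (S : seq V) : Prop :=
  forall a b, a \in S -> b \in S -> (exists c : R, b = c *: a) -> b = a \/ b = - a.

Definition irreducible (S : seq V) : Prop :=
  S <> [::] /\
  forall P : pred V,
    (forall a b, a \in S -> b \in S -> P a -> ~~ P b -> dot a b = 0) ->
    (forall a, a \in S -> P a) \/ (forall a, a \in S -> ~~ P a).

Definition is_positive_system (S Sp : seq V) : Prop :=
  exists v : V, (forall a, a \in S -> dot v a != 0) /\
    (forall a, a \in Sp <-> (a \in S /\ 0 < dot v a)).

Definition simple_root (Sp : seq V) (a : V) : bool :=
  (a \in Sp) && ~~ [exists i : 'I_(size Sp), exists j : 'I_(size Sp),
                      a == Sp`_i + Sp`_j].

Definition highest_root (S Sp : seq V) (b : V) : Prop :=
  b \in S /\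
  forall a, a \in S -> exists k : V -> nat,
    b - a = \sum_(s <- Sp | simple_root Sp s) (k s)%:R *: s.

Definition e (i : 'I_n) : V := delta_mx 0 i.
Definition isCn (x : V) : Prop :=
  (exists i, x = 2%:R *: e i \/ x = - (2%:R *: e i)) \/
  (exists i j, i != j /\ exists s t : bool,
      x = (-1) ^+ s *: e i + (-1) ^+ t *: e j).

Definition type_C (S : seq V) : Prop :=
  exists M : 'M[R]_n, M \in unitmx /\ forall x, x \in S <-> isCn (x *m M).

Definition Sig (S : seq V) (g : V) (k : int) : pred V :=
  fun a => (a \in S) && (cpair g a == k%:~R).

End RootSystems.

(* Main.v *)
Require Import Defs.
From HB Require Import structures.
From mathcomp Require Import all_boot all_order all_algebra.
From mathcomp Require Import reals.
From mathcomp Require Import ring lra.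
Import Order.TTheory GRing.Theory Num.Theory.
Local Open Scope ring_scope.
Set Implicit Arguments. Unset Strict Implicit.

Lemma dotC (R : realType) n (x y : 'rV[R]_n) : dot x y = dot y x.
Proof. by apply: eq_bigr => i _; rewrite mulrC. Qed.

Lemma dotDr (R : realType) n (x y z : 'rV[R]_n) : dot x (y + z) = dot x y + dot x z.
Proof. rewrite /dot -big_split; apply: eq_bigr => i _; by rewrite mxE mulrDr. Qed.

Lemma dotNr (R : realType) n (x y : 'rV[R]_n) : dot x (- y) = - dot x y.
Proof. rewrite /dot -sumrN; apply: eq_bigr => i _; by rewrite mxE mulrN. Qed.

Lemma dotBr (R : realType) n (x y z : 'rV[R]_n) : dot x (y - z) = dot x y - dot x z.
Proof. by rewrite dotDr dotNr. Qed.

Lemma dotDl (R : realType) n (x y z : 'rV[R]_n) : dot (y + z) x = dot y x + dot z x.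
Proof. by rewrite dotC dotDr !(@dotC _ _ x). Qed.

Lemma dotBl (R : realType) n (x y z : 'rV[R]_n) : dot (y - z) x = dot y x - dot z x.
Proof. by rewrite dotC dotBr !(@dotC _ _ x). Qed.

Lemma dot_ge0 (R : realType) n (x : 'rV[R]_n) : 0 <= dot x x.
Proof. by apply: sumr_ge0 => i _; rewrite -expr2 sqr_ge0. Qed.

Lemma dot_eq0 (R : realType) n (x : 'rV[R]_n) : dot x x = 0 -> x = 0.
Proof.
move=> h; apply/rowP => i.
have nn : forall j : 'I_n, predT j -> 0 <= x 0 j * x 0 j.
  by move=> j _; rewrite -expr2 sqr_ge0.
have := @psumr_eq0P _ _ predT (fun i => x 0 i * x 0 i) nn h i isT.
by rewrite mxE; move/eqP; rewrite mulf_eq0 orbb => /eqP ->.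
Qed.

Lemma root_nz (R : realType) n (S : seq 'rV[R]_n) x :
  is_root_system S -> x \in S -> dot x x != 0.
Proof.
case=> h0 _ _ _ xS; apply/eqP => /dot_eq0 x0; by rewrite -x0 xS in h0.
Qed.

Lemma reflE (R : realType) n (a x : 'rV[R]_n) : refl a x = x - cpair a x *: a.
Proof. by rewrite /refl /cpair dotC. Qed.

Lemma rootN (R : realType) n (S : seq 'rV[R]_n) x :
  is_root_system S -> x \in S -> - x \in S.
Proof.
move=> hS xS; have nz := root_nz hS xS; case: hS => _ _ hr _.
have := hr x x xS xS; rewrite reflE.
have -> : cpair x x = 1 + 1 by rewrite /cpair; field.
by rewrite scalerDl scale1r opprD addrA subrr add0r.
Qed.

Lemma sub_root (R : realType) n (S : seq 'rV[R]_n) a x :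
  is_root_system S -> a \in S -> x \in S -> dot a x = dot a a / 2 -> a - x \in S.
Proof.
move=> hS aS xS h; have nz := root_nz hS aS.
have := hS; case=> _ _ hr _.
have := hr a x aS xS; rewrite reflE.
have -> : cpair a x = 1 by rewrite /cpair h; field.
by rewrite scale1r => /(rootN hS); rewrite opprB.
Qed.

Lemma add_root (R : realType) n (S : seq 'rV[R]_n) a x :
  is_root_system S -> a \in S -> x \in S -> dot a x = - (dot a a / 2) -> x + a \in S.
Proof.
move=> hS aS xS h; have nz := root_nz hS aS.
have := hS; case=> _ _ hr _.
have := hr a x aS xS; rewrite reflE.
have -> : cpair a x = -1 by rewrite /cpair h; field.
by rewrite scaleN1r opprK.
Qed.

Lemma int_ge1 (R : realType) (z : int) : (0 : R) < z%:~R -> (1 : R) <= z%:~R.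
Proof. by rewrite ltr0z ler1z; case: z => [[|k]|k]. Qed.

Lemma eq_long (R : realType) n (S : seq 'rV[R]_n) c x y :
  is_root_system S -> c \in S -> x \in S -> y \in S ->
  dot x x = dot y y -> dot c x = dot x x -> 2 * dot c y = dot y y -> c = x.
Proof.
move=> hS cS xS yS hxy hcx hcy.
have nzc := root_nz hS cS; have nzx := root_nz hS xS.
have gc := dot_ge0 c; have gx := dot_ge0 x.
have pc : 0 < dot c c by rewrite lt_def nzc gc.
have px : 0 < dot x x by rewrite lt_def nzx gx.
have := hS; case=> _ _ _ hi.
have [z hz] := hi c y cS yS.
set t := cpair c y in hz.
have ht : t * dot c c = dot x x by rewrite /t /cpair hcy hxy; field.
have t1 : 1 <= t.
  rewrite hz; apply: int_ge1; rewrite -hz.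
  have -> : t = dot x x / dot c c by rewrite /t /cpair hcy hxy.
  by rewrite divr_gt0.
have le : dot c c <= dot x x by nra.
have e0 : dot (c - x) (c - x) = 0.
  have g := dot_ge0 (c - x).
  move: g; rewrite !dotBr !dotBl (@dotC _ _ x c) => g; lra.
by apply/eqP; rewrite -subr_eq0; apply/eqP/dot_eq0.
Qed.

Lemma SigE' (R : realType) n (S : seq 'rV[R]_n) g (k : int) a : dot g g != 0 ->
  (a \in Sig S g k) <-> (a \in S /\ dot g a = k%:~R * dot g g / 2).
Proof.
move=> nz; rewrite [_ \in _]/in_mem /= /Sig; split.
  by case/andP=> aS /eqP h; split=> //; rewrite -h /cpair; field.
by case=> aS h; rewrite aS /=; apply/eqP; rewrite /cpair h; field.
Qed.

Unset Implicit Arguments.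

Theorem lemma3p4 (R : realType) (n : nat) (S Sp : seq 'rV[R]_n)
    (beta delta : 'rV[R]_n) :
  is_root_system S -> reduced S -> irreducible S -> ~ type_C S ->
  is_positive_system S Sp -> highest_root S Sp beta ->
  delta \in Sig S beta 1 -> dot delta delta = dot beta beta ->
  let Dp := fun a : 'rV[R]_n => exists g, [/\ g \in Sp, g \in Sig S beta 0,
                                           g \in Sig S delta 1 & a = delta - g] in
  let Dm := fun a : 'rV[R]_n => exists g, [/\ g \in Sp, g \in Sig S beta 0,
                                           g \in Sig S delta (-1) & a = delta + g] in
  [/\ (forall a, (a \in Sig S beta 1) && (a \in Sig S delta 1) <-> Dp a \/ Dm a),
      (forall a, ~ (Dp a /\ Dm a)),
      (forall a, (a \in Sig S beta 1) && (a \in Sig S delta 0) <->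
                 exists g, [/\ g \in Sig S beta 1, g \in Sig S delta 1 & a = beta - g]),
      (forall a, (a \in Sig S beta 1) && (a \in Sig S delta 2) <-> a = delta) &
      (forall a, (a \in Sig S beta 1) && (a \in Sig S delta (-1)) <-> a = beta - delta)].
Proof.
move=> hS _ _ _ [v [vnz vSp]] [bS _] hd dd Dp Dm.
have Lnz := root_nz hS bS.
have dnz : dot delta delta != 0 by rewrite dd.
have [dS bd] := (SigE' _ _ _ Lnz).1 hd.
have bd' : dot beta delta = dot beta beta / 2 by rewrite bd; ring.
have db : dot delta beta = dot beta beta / 2 by rewrite dotC.
split.
- move=> a; split.
  + case/andP => /(SigE' _ _ _ Lnz) [aS hba] /(SigE' _ _ _ dnz) [_ hda].
    have hba' : dot beta a = dot beta beta / 2 by rewrite hba; ring.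
    have hda' : dot delta a = dot delta delta / 2 by rewrite hda; ring.
    have gS : delta - a \in S by apply: sub_root.
    have hbg : dot beta (delta - a) = 0 by rewrite dotBr; lra.
    have hdg : dot delta (delta - a) = dot delta delta / 2 by rewrite dotBr; lra.
    have := vnz _ gS; rewrite neq_lt => /orP [vneg|vpos].
    * right; exists (- (delta - a)); split.
      -- apply/vSp; split; first exact: rootN.
         by rewrite dotNr oppr_gt0.
      -- apply/(SigE' _ _ _ Lnz); split; first exact: rootN.
         rewrite dotNr hbg /=; lra.
      -- apply/(SigE' _ _ _ dnz); split; first exact: rootN.
         rewrite dotNr hdg /=; lra.
      -- by rewrite opprB addrC subrK.
    * left; exists (delta - a); split => //.
      -- by apply/vSp.
      -- apply/(SigE' _ _ _ Lnz); split => //; rewrite hbg /=; lra.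
      -- apply/(SigE' _ _ _ dnz); split => //; rewrite hdg /=; lra.
      -- by rewrite opprB addrC subrK.
  + case=> [[g [gSp /(SigE' _ _ _ Lnz) [gS hbg] /(SigE' _ _ _ dnz) [_ hdg] ->]]
           |[g [gSp /(SigE' _ _ _ Lnz) [gS hbg] /(SigE' _ _ _ dnz) [_ hdg] ->]]].
    * have hdg' : dot delta g = dot delta delta / 2 by rewrite hdg; ring.
      have aS : delta - g \in S by apply: sub_root.
      apply/andP; split.
      -- apply/(SigE' _ _ _ Lnz); split => //; rewrite dotBr hbg /=; lra.
      -- apply/(SigE' _ _ _ dnz); split => //; rewrite dotBr hdg' /=; lra.
    * have hdg' : dot delta g = - (dot delta delta / 2) by rewrite hdg /=; ring.
      have aS : g + delta \in S by apply: add_root.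
      rewrite addrC; apply/andP; split.
      -- apply/(SigE' _ _ _ Lnz); split => //; rewrite dotDr hbg /=; lra.
      -- apply/(SigE' _ _ _ dnz); split => //; rewrite dotDr hdg' /=; lra.
- move=> a [[g [gSp _ _ ->]] [g' [g'Sp _ _ e]]].
  move/addrI: e => e.
  have := (vSp g).1 gSp; have := (vSp g').1 g'Sp; rewrite -e dotNr.
  move=> [_ h1] [_ h2]; lra.
- move=> a; split.
  + case/andP => /(SigE' _ _ _ Lnz) [aS hba] /(SigE' _ _ _ dnz) [_ hda].
    have hba' : dot beta a = dot beta beta / 2 by rewrite hba; ring.
    have gS : beta - a \in S by apply: sub_root.
    exists (beta - a); split.
    * apply/(SigE' _ _ _ Lnz); split => //; rewrite dotBr hba' /=; lra.
    * apply/(SigE' _ _ _ dnz); split => //; rewrite dotBr hda db dd /=; lra.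
    * by rewrite opprB addrC subrK.
  + move=> [g [/(SigE' _ _ _ Lnz) [gS hbg] /(SigE' _ _ _ dnz) [_ hdg] ->]].
    have hbg' : dot beta g = dot beta beta / 2 by rewrite hbg; ring.
    have aS : beta - g \in S by apply: sub_root.
    apply/andP; split.
    * apply/(SigE' _ _ _ Lnz); split => //; rewrite dotBr hbg' /=; lra.
    * apply/(SigE' _ _ _ dnz); split => //; rewrite dotBr hdg db dd /=; lra.
- move=> a; split.
  + case/andP => /(SigE' _ _ _ Lnz) [aS hba] /(SigE' _ _ _ dnz) [_ hda].
    apply: (eq_long hS aS dS bS) => //.
    * by rewrite dotC hda /=; field.
    * by rewrite dotC hba /=; field.
  + move=> ->; rewrite hd /=.
    apply/(SigE' _ _ _ dnz); split => //; by rewrite /=; field.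
- move=> a; split.
  + case/andP => /(SigE' _ _ _ Lnz) [aS hba] /(SigE' _ _ _ dnz) [_ hda].
    have hda' : dot delta a = - (dot delta delta / 2) by rewrite hda /=; ring.
    have cS : a + delta \in S by apply: add_root.
    have e : a + delta = beta.
      apply: (eq_long hS cS bS dS) => //.
      * by rewrite dotDl dotC hba (@dotC _ _ delta) bd' /=; field.
      * by rewrite dotDl dotC hda' /=; field.
    by rewrite -e addrK.
  + move=> ->.
    have aS : beta - delta \in S by apply: sub_root.
    apply/andP; split.
    * apply/(SigE' _ _ _ Lnz); split => //; rewrite dotBr bd' /=; lra.
    * apply/(SigE' _ _ _ dnz); split => //; rewrite dotBr db dd /=; lra.
Qed.
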